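(* If $P$ is a quadrilateral (a $4$-sided polygon) with vertices $v_1,v_2,v_3,v_4\in\mathbb{C}$ in counterclockwise order that satisfies the closed cap condition, then $P$ is a parallelogram; more precisely $v_2 - v_1 = v_3 - v_4$.
   Context: Identify $\mathbb{R}^2$ with $\mathbb{C}$. An $n$-sided polygon is a closed region of the plane enclosed by a simple cycle of $n$ straight line segments; its vertices are the endpoints of these segments. For a polygon with vertices $v_1,\dots,v_n$ in counterclockwise order, set $v_{n+1}=v_1$, let $s_k = v_{k+1}-v_k$ be its $k$-th edge, and let $\theta_k\in(0,2\pi)$ be the internal angle at $v_k$. Cap construction (polygonal cap curve): set $\kappa = 4\pi/n$. For each $k$ let $\alpha_k = \pi - \theta_k$ (the counterclockwise turning angle of $P$ at $v_k$, so that $\arg s_k = \arg s_{k-1} + \alpha_k$), $\hat\theta_k = 2\pi - \theta_k - \kappa$, and $\beta_k = \pi - \hat\theta_k$ (so $\alpha_k+\beta_k = \kappa$). Put $\hat v_1 = v_1$, $\hat v_2 = v_2$, and for $k=2,\dots,n$ define $\hat v_{k+1} = \hat v_k + \hat s_k$, where $\hat s_k$ is the complex number with $|\hat s_k| = |s_k|$ whose direction is obtained by turning the direction of $\hat s_{k-1} = \hat v_k - \hat v_{k-1}$ clockwise by the angle $\beta_k$, i.e. $\hat s_k/|\hat s_k| = e^{-i\beta_k}\,\hat s_{k-1}/|\hat s_{k-1}|$. The points $\hat v_1,\dots,\hat v_{n+1}$ are the vertices of the polygonal cap curve of $P$. Closed cap condition: $P$ satisfies the closed cap condition if $\hat v_{n+1}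 = \hat v_1$. *)

(* Defs.v *)
From Stdlib Require Import Reals List Arith.
From Coquelicot Require Import Coquelicot.
Open Scope R_scope.

(* Principal argument of a complex number, with values in [0, 2*PI)
   (atan2-style definition; arg02 0 = 0 by convention). *)
Definition arg02 (z : C) : R :=
  let x := fst z in let y := snd z in
  let a :=
    if Rlt_dec 0 x then atan (y / x)
    else if Rlt_dec x 0 then
      (if Rle_dec 0 y then atan (y / x) + PI else atan (y / x) - PI)
    else if Rlt_dec 0 y then PI / 2
    else if Rlt_dec y 0 then - (PI / 2)
    else 0 in
  if Rlt_dec a 0 then a + 2 * PI else a.

Definition cexp (t : R) : C := (cos t, sin t).

(* A polygon with n vertices is given by w : nat -> C, where w 0, ..., w (n-1)
   are the vertices v_1, ..., v_n of the paper (0-indexed storage). *)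

Definition seg (a b z : C) : Prop :=
  exists t : R, 0 <= t <= 1 /\ z = (a + RtoC t * (b - a))%C.

Definition on_edge (n : nat) (w : nat -> C) (i : nat) (z : C) : Prop :=
  seg (w i) (w ((S i) mod n)) z.

Definition simple_polygon (n : nat) (w : nat -> C) : Prop :=
  (3 <= n)%nat /\
  (forall i j, (i < n)%nat -> (j < n)%nat -> i <> j -> w i <> w j) /\
  (forall i j z, (i < n)%nat -> (j < n)%nat -> i <> j ->
     on_edge n w i z -> on_edge n w j z ->
     (j = (S i) mod n /\ z = w j) \/ (i = (S j) mod n /\ z = w i)).

Definition signed_area (n : nat) (w : nat -> C) : R :=
  fold_right Rplus 0
    (map (fun i => (fst (w i) * snd (w ((S i) mod n))
                    - fst (w ((S i) mod n)) * snd (w i)) / 2) (seq 0 n)).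

Definition counterclockwise (n : nat) (w : nat -> C) : Prop :=
  0 < signed_area n w.

(* Paper (1-based, cyclic) indexing: V k = v_k, with V 0 = v_n, V (n+1) = v_1. *)
Definition V (n : nat) (w : nat -> C) (k : nat) : C := w ((k + n - 1) mod n).

Definition sedge (n : nat) (w : nat -> C) (k : nat) : C :=
  (V n w (S k) - V n w k)%C.

(* Internal angle theta_k in (0, 2*PI) at v_k of a counterclockwise polygon:
   the counterclockwise angle from the outgoing edge direction v_{k+1} - v_k
   to the reversed incoming edge direction v_{k-1} - v_k (interior on the left). *)
Definition theta (n : nat) (w : nat -> C) (k : nat) : R :=
  arg02 ((V n w (k - 1) - V n w k) / (V n w (S k) - V n w k))%C.

Definition kappa (n : nat) : R := 4 * PI / INR n.
Definition alpha (n : nat) (w : nat -> C) (k : nat) : R := PI - theta n w k.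
Definition theta_hat (n : nat) (w : nat -> C) (k : nat) : R :=
  2 * PI - theta n w k - kappa n.
Definition beta (n : nat) (w : nat -> C) (k : nat) : R := PI - theta_hat n w k.

Fixpoint cap_edge (n : nat) (w : nat -> C) (k : nat) : C :=
  match k with
  | O => 0%C
  | S O => sedge n w 1
  | S k' => (RtoC (Cmod (sedge n w k)) * cexp (- beta n w k)
             * (cap_edge n w k' / RtoC (Cmod (cap_edge n w k'))))%C
  end.

Fixpoint cap_vertex (n : nat) (w : nat -> C) (k : nat) : C :=
  match k with
  | O => V n w 1
  | S O => V n w 1
  | S k' => (cap_vertex n w k' + cap_edge n w k')%C
  end.

Definition closed_cap (n : nat) (w : nat -> C) : Prop :=
  cap_vertex n w (S n) = cap_vertex n w 1.

Definition quad (v1 v2 v3 v4 : C) : nat -> C :=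
  fun i => match i with 0 => v1 | 1 => v2 | 2 => v3 | _ => v4 end.

(* Main.v *)
Require Import Defs.
From Stdlib Require Import Reals Lra Lia.
From Coquelicot Require Import Coquelicot.
Open Scope R_scope.

Lemma sq_fact (x y : R) : x <> 0 -> sqrt (x*x + y*y) = Rabs x * sqrt (1 + (y/x)²).
Proof.
  intros Hx. replace (x*x+y*y) with (Rsqr x * (1 + (y/x)²)) by (unfold Rsqr; field; auto).
  rewrite sqrt_mult, sqrt_Rsqr_abs; auto. apply Rle_0_sqr.
  pose proof (Rle_0_sqr (y/x)). lra.
Qed.

Lemma arg02_spec (x y : R) : ~ (x = 0 /\ y = 0) ->
  cos (arg02 (x,y)) * Cmod (x,y) = x /\ sin (arg02 (x,y)) * Cmod (x,y) = y.
Proof.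
  intros Hz.
  assert (Hm : forall a, cos a * Cmod (x,y) = x /\ sin a * Cmod (x,y) = y ->
     cos (if Rlt_dec a 0 then a + 2*PI else a) * Cmod (x,y) = x /\
     sin (if Rlt_dec a 0 then a + 2*PI else a) * Cmod (x,y) = y).
  { intros a H. destruct (Rlt_dec a 0); auto.
    rewrite cos_plus, sin_plus, cos_2PI, sin_2PI. destruct H as [H1 H2]. split; nra. }
  unfold arg02; simpl fst; simpl snd. apply Hm.
  unfold Cmod; simpl fst; simpl snd.
  replace (x^2 + y^2) with (x*x+y*y) by ring.
  destruct (Rlt_dec 0 x) as [Hx|Hx].
  { rewrite sq_fact by lra. rewrite cos_atan, sin_atan, Rabs_right by lra.
    assert (0 < sqrt (1 + (y/x)²)) by (apply sqrt_lt_R0; pose proof (Rle_0_sqr (y/x)); lra).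
    split; field; lra. }
  destruct (Rlt_dec x 0) as [Hx'|Hx'].
  { rewrite sq_fact by lra. rewrite Rabs_left by lra.
    assert (0 < sqrt (1 + (y/x)²)) by (apply sqrt_lt_R0; pose proof (Rle_0_sqr (y/x)); lra).
    destruct (Rle_dec 0 y).
    - rewrite cos_plus, sin_plus, cos_PI, sin_PI, cos_atan, sin_atan. split; field; lra.
    - rewrite cos_minus, sin_minus, cos_PI, sin_PI, cos_atan, sin_atan. split; field; lra. }
  assert (x = 0) by lra. subst x.
  replace (0*0+y*y) with (y*y) by ring.
  destruct (Rlt_dec 0 y).
  { rewrite sqrt_square by lra. rewrite cos_PI2, sin_PI2. split; ring. }
  destruct (Rlt_dec y 0).
  { replace (y*y) with ((-y)*(-y)) by ring. rewrite sqrt_square by lra.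
    rewrite cos_neg, sin_neg, cos_PI2, sin_PI2. split; ring. }
  exfalso. apply Hz. lra.
Qed.

Lemma cexp_arg (z : C) : z <> 0%C -> (cexp (arg02 z) * RtoC (Cmod z))%C = z.
Proof.
  destruct z as [x y]. intros Hz.
  destruct (arg02_spec x y) as [H1 H2].
  { intros [-> ->]. apply Hz. reflexivity. }
  unfold cexp, Cmult, RtoC; simpl. f_equal; [rewrite Rmult_0_r; lra | rewrite Rmult_0_r; lra].
Qed.

Lemma cexp_neg (t : R) : (cexp (- t) * cexp t)%C = 1%C.
Proof.
  unfold cexp, Cmult; simpl. rewrite cos_neg, sin_neg.
  pose proof (sin2_cos2 t). unfold Rsqr in H. unfold RtoC; f_equal; [lra | ring].
Qed.

Lemma RtoC_nz (r : R) : r <> 0 -> RtoC r <> 0%C.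
Proof. intros H E. apply H. unfold RtoC in E. injection E. auto. Qed.

Lemma Cmod_nz (z : C) : z <> 0%C -> RtoC (Cmod z) <> 0%C.
Proof. intros H. apply RtoC_nz. intros E. apply H, Cmod_eq_0, E. Qed.

Lemma step (a b c : C) : a <> 0%C -> b <> 0%C -> Cmod c = Cmod a ->
  (RtoC (Cmod b) * cexp (- arg02 (a / b)) * (c / RtoC (Cmod c)))%C = (b * c / a)%C.
Proof.
  intros Ha Hb Hc. rewrite Hc.
  assert (Hz : (a / b)%C <> 0%C).
  { intros E. apply Ha. replace a with (a / b * b)%C by (field; auto). rewrite E. ring. }
  pose proof (cexp_arg _ Hz) as E1. pose proof (cexp_neg (arg02 (a/b))) as E2.
  rewrite Cmod_div in E1 by auto.
  set (e := cexp (arg02 (a/b))) in *. set (e' := cexp (- arg02 (a/b))) in *.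
  pose proof (Cmod_nz _ Ha). pose proof (Cmod_nz _ Hb).
  assert (He' : e' = (e' * (e * RtoC (Cmod a / Cmod b)) * (b / a))%C).
  { rewrite E1. field. auto. }
  rewrite Cmult_assoc, E2 in He'.
  rewrite He'. rewrite RtoC_div. field. repeat split; auto.
  intros E. apply (Cmod_nz _ Hb). rewrite E. reflexivity.
Qed.

Lemma sub_nz (x y : C) : x <> y -> (x - y)%C <> 0%C.
Proof. intros H E. apply H. replace x with ((x - y) + y)%C by ring. rewrite E. ring. Qed.

Lemma cmod_sub (x y : C) : Cmod (x - y)%C = Cmod (y - x)%C.
Proof. replace (x - y)%C with (- (y - x))%C by ring. apply Cmod_opp. Qed.

Lemma cmod_neg_sub (x y : C) : Cmod (- (x - y))%C = Cmod (x - y)%C.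
Proof. apply Cmod_opp. Qed.

Theorem proposition2p2 (v1 v2 v3 v4 : C) :
  simple_polygon 4 (quad v1 v2 v3 v4) ->
  counterclockwise 4 (quad v1 v2 v3 v4) ->
  closed_cap 4 (quad v1 v2 v3 v4) ->
  (v2 - v1)%C = (v3 - v4)%C.
Proof.
  intros [_ [Hd _]] _ Hcl.
  set (w := quad v1 v2 v3 v4) in *.
  assert (d12 : v1 <> v2) by (apply (Hd 0%nat 1%nat); lia).
  assert (d23 : v2 <> v3) by (apply (Hd 1%nat 2%nat); lia).
  assert (d34 : v3 <> v4) by (apply (Hd 2%nat 3%nat); lia).
  assert (d41 : v4 <> v1) by (apply (Hd 3%nat 0%nat); lia).
  assert (Hb : forall k, beta 4 w k = theta 4 w k).
  { intros k. unfold beta, theta_hat, kappa. replace (INR 4) with 4 by (simpl; ring). field. }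
  assert (E1 : cap_edge 4 w 1 = (v2 - v1)%C) by reflexivity.
  assert (E2 : cap_edge 4 w 2 = (- (v3 - v2))%C).
  { change (cap_edge 4 w 2) with (RtoC (Cmod (v3 - v2)) * cexp (- beta 4 w 2)
             * (cap_edge 4 w 1 / RtoC (Cmod (cap_edge 4 w 1))))%C.
    rewrite Hb, E1. change (theta 4 w 2) with (arg02 ((v1 - v2) / (v3 - v2))%C).
    rewrite step; [ | apply sub_nz; auto | apply sub_nz; auto | apply cmod_sub].
    field. apply sub_nz; auto. }
  assert (E3 : cap_edge 4 w 3 = (v4 - v3)%C).
  { change (cap_edge 4 w 3) with (RtoC (Cmod (v4 - v3)) * cexp (- beta 4 w 3)
             * (cap_edge 4 w 2 / RtoC (Cmod (cap_edge 4 w 2))))%C.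
    rewrite Hb, E2. change (theta 4 w 3) with (arg02 ((v2 - v3) / (v4 - v3))%C).
    rewrite step; [ | apply sub_nz; auto | apply sub_nz; auto | rewrite cmod_neg_sub; apply cmod_sub].
    field. apply sub_nz; auto. }
  assert (E4 : cap_edge 4 w 4 = (- (v1 - v4))%C).
  { change (cap_edge 4 w 4) with (RtoC (Cmod (v1 - v4)) * cexp (- beta 4 w 4)
             * (cap_edge 4 w 3 / RtoC (Cmod (cap_edge 4 w 3))))%C.
    rewrite Hb, E3. change (theta 4 w 4) with (arg02 ((v3 - v4) / (v1 - v4))%C).
    rewrite step; [ | apply sub_nz; auto | apply sub_nz; auto | apply cmod_sub].
    field. apply sub_nz; auto. }
  unfold closed_cap in Hcl.
  change (cap_vertex 4 w 5) with (cap_vertex 4 w 1 + cap_edge 4 w 1 + cap_edge 4 w 2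
     + cap_edge 4 w 3 + cap_edge 4 w 4)%C in Hcl.
  rewrite E1, E2, E3, E4 in Hcl. change (cap_vertex 4 w 1) with v1 in Hcl.
  destruct v1 as [a1 b1], v2 as [a2 b2], v3 as [a3 b3], v4 as [a4 b4].
  unfold Cminus, Cplus, Copp in *; simpl in *.
  injection Hcl as H1 H2. f_equal; lra.
Qed.
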